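(* Let $r, s, m, n$ be positive integers, and let $f: V(H_{n,m}) \rightarrow \{-r,s\}$ be a function. If there are directed $m$-paths $P$ and $Q$ in $H_{n,m}$ such that $f(V(P)) < f(V(Q))$, then for any $p \in L(r,s,m)$ with $f(V(P)) \le p \le f(V(Q))$ there is a directed $m$-path $P^*$ in $H_{n,m}$ such that $f(V(P^* )) = p$.
   Context: For a set $Y$ of vertices, $f(Y)=\sum_{y\in Y}f(y)$. $H_{n,m}$ is the directed graph whose vertex set is the disjoint union of $V_1,\dots,V_m$ with $|V_i|=n$, and whose arc set is $\bigcup_{i=1}^{m-1}\{(v,w): v\in V_i, w\in V_{i+1}\}$. A directed $m$-path is a directed path with $m$ vertices. $L(r,s,m)=\{-rx+sy : x,y\in\mathbb{Z}, x,y\ge 0, x+y=m\}$. *)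

(* Defs.v *)
From mathcomp Require Import all_boot all_order all_algebra.
Set Implicit Arguments. Unset Strict Implicit. Unset Printing Implicit Defensive.
Import Order.TTheory GRing.Theory Num.Theory.

(* Vertices of H_{n,m}: (i, v) with i : 'I_m the layer V_{i+1} and v : 'I_n
   the index inside the layer. *)
Definition Hvert (n m : nat) := ('I_m * 'I_n)%type.

Definition Harc (n m : nat) : rel (Hvert n m) :=
  fun v w => (v.1 : nat).+1 == (w.1 : nat).

Definition is_dpath (n m : nat) (k : nat) (P : seq (Hvert n m)) : Prop :=
  [/\ size P = k, uniq P & sorted (@Harc n m) P].

Definition fsum (n m : nat) (f : Hvert n m -> int) (P : seq (Hvert n m)) : int :=
  (\sum_(y <- P) f y)%R.

Definition Lset (r s m : nat) : pred int :=
  fun p => [exists x : 'I_m.+1,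
              p == (- (r%:Z) * (x : nat)%:Z + (s%:Z) * (m - x)%:Z)%R].

(* Main.v *)
Require Import Defs.
From mathcomp Require Import all_boot all_order all_algebra.
From mathcomp Require Import zify.
Import Order.TTheory GRing.Theory Num.Theory.

Section Aux.
Variables (n m : nat).
Implicit Types S : seq (Hvert n m).

Lemma dpath_layer x0 S : is_dpath m S -> forall i, i < m -> (nth x0 S i).1 = i :> nat.
Proof.
case=> sz _ /(sortedP x0) so.
have H : forall i, i < m -> ((nth x0 S i).1 : nat) = (nth x0 S 0).1 + i.
  elim=> [|i IH] Hi; first by rewrite addn0.
  have := so i; rewrite sz => /(_ Hi) /eqP <-.
  by rewrite IH ?addnS // ltnW.
have Hm : 0 < m by move: (ltn_ord (nth x0 S 0).1); lia.
have := H m.-1; rewrite prednK // => /(_ (leqnn _)) E.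
have := ltn_ord (nth x0 S m.-1).1; rewrite E.
move=> Hlt i Hi; rewrite H //.
have -> : ((nth x0 S 0).1 : nat) = 0 by lia.
done.
Qed.

Lemma layer_dpath x0 S : size S = m -> (forall i, i < m -> (nth x0 S i).1 = i :> nat) -> is_dpath m S.
Proof.
move=> sz H; split => //.
  apply/(uniqP x0) => i j; rewrite !inE sz => Hi Hj E.
  by rewrite -(H i Hi) -(H j Hj) E.
apply/(sortedP x0) => i; rewrite sz => Hi.
by rewrite /Harc /= H ?H // ltnW.
Qed.

End Aux.

Local Open Scope ring_scope.
Lemma fsum_count (n m : nat) (f : Hvert n m -> int) (r s : nat) :
  (forall v, f v = - (r%:Z) \/ f v = s%:Z) ->
  forall S, fsum f S = (s * size S)%:Z - ((r + s) * count (fun v => f v == - (r%:Z)) S)%:Z.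
Proof.
move=> Hf; elim=> [|v S IH]; first by rewrite /fsum big_nil /= !muln0.
rewrite /fsum big_cons -/(fsum f S) IH /=.
case: (Hf v) => ->.
  rewrite eqxx /=. lia.
case: eqP => [E|_]; first by move: E; lia.
rewrite /=; lia.
Qed.

Local Close Scope ring_scope.
Lemma ivt (c : nat -> nat) (x k : nat) :
  (forall j, c j.+1 <= (c j).+1) -> c 0 <= x -> x <= c k -> exists2 j, j <= k & c j = x.
Proof.
move=> Hc H0; elim: k => [|k IH] Hk; first by exists 0 => //; apply/eqP; rewrite eqn_leq H0 Hk.
case: (leqP x (c k)) => [/IH [j Hj Ej]|Hlt]; first by exists j => //; apply: leq_trans Hj _.
exists k.+1 => //; have := Hc k; lia.
Qed.

Local Open Scope ring_scope.

Theorem lemma4p2 (r s m n : nat) (f : Hvert n m -> int) :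
  (0 < r)%N -> (0 < s)%N -> (0 < m)%N -> (0 < n)%N ->
  (forall v, f v = - (r%:Z) \/ f v = s%:Z) ->
  forall P Q : seq (Hvert n m),
    is_dpath m P -> is_dpath m Q -> fsum f P < fsum f Q ->
    forall p : int, Lset r s m p -> fsum f P <= p -> p <= fsum f Q ->
    exists Pstar : seq (Hvert n m), is_dpath m Pstar /\ fsum f Pstar = p.
Proof.
move=> Hr Hs Hm Hn Hf P Q HP HQ _ p /existsP [x /eqP ->] HPp HpQ.
have x0 : Hvert n m := (Ordinal Hm, Ordinal Hn).
set a := (fun v => f v == - (r%:Z)).
have LP := @dpath_layer _ _ x0 _ HP; have LQ := @dpath_layer _ _ x0 _ HQ.
case: HP => szP _ _; case: HQ => szQ _ _.
have cPm : (count a P <= m)%N by move: (count_size a P); rewrite szP.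
have cQm : (count a Q <= m)%N by move: (count_size a Q); rewrite szQ.
have xm : (x <= m)%N by have := ltn_ord x; lia.
move: HPp HpQ; rewrite !(@fsum_count _ _ _ _ _ Hf) szP szQ -/a => HPp HpQ.
have xP : (x <= count a P)%N by nia.
have xQ : (count a Q <= x)%N by nia.
pose R k := take k P ++ drop k Q.
have szR k : (k <= m)%N -> size (R k) = m.
  move=> Hk; rewrite size_cat size_take size_drop szP szQ.
  case: ltnP; lia.
have nthR k i : (k <= m)%N -> (i < m)%N -> nth x0 (R k) i = if (i < k)%N then nth x0 P i else nth x0 Q i.
  move=> Hk Hi; rewrite nth_cat size_take szP.
  case: (ltnP k m) => Hkm.
    case: ltnP => Hik; first by rewrite nth_take.
    by rewrite nth_drop subnKC.
  have -> : k = m by lia.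
  by rewrite Hi nth_take.
pose c k := count a (R (minn k m)).
have Hc j : (c j.+1 <= (c j).+1)%N.
  rewrite /c /R; case: (ltnP j m) => Hj.
    have -> : minn j.+1 m = j.+1 by lia.
    rewrite (take_nth x0) ?szP // (drop_nth x0 (n:=j)) ?szQ //.
    rewrite -cats1 !count_cat /=; lia.
  have -> : minn j.+1 m = m by lia.
  lia.
have c0 : (c 0 <= x)%N.
  by rewrite /c /R min0n take0 drop0.
have cm : (x <= c m)%N.
  by rewrite /c /R minnn take_oversize ?szP // drop_oversize ?szQ // cats0.
have [k Hk Ek] := @ivt c x m Hc c0 cm.
exists (R k); rewrite /c (minn_idPl Hk) in Ek; split.
  apply: (@layer_dpath _ _ x0 _ (szR k Hk)) => i Hi.
  by rewrite nthR //; case: ifP => _; [apply: LP | apply: LQ].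
rewrite (@fsum_count _ _ _ _ _ Hf) szR // -/a Ek.
nia.
Qed.
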